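(* For all integers $0\le t\le n$, there exists a monotone, acyclic $2$-CNF formula $F$ on $n$ variables that is $t$-admissible and satisfies $|\mathrm{sat}_t(F)|=S(n,t,2)$. In particular $S^+(n,t,2)=S(n,t,2)$.
   Context: A $2$-CNF formula over $x_1,\dots,x_n$ is a conjunction of clauses each containing at most two literals; it is monotone if no literal is negated. The implication graph $G(F)$ is the directed graph on the $2n$ literals which, for each clause $X\lor Y$, contains edges $\neg X\to Y$ and $\neg Y\to X$; $F$ is acyclic if $G(F)$ has no directed cycle. $\mathrm{sat}_t(F)$ is the set of satisfying assignments of Hamming weight exactly $t$; $F$ is $t$-admissible if it has no satisfying assignment of Hamming weight less than $t$. $S(n,t,k)$ (resp. $S^+(n,t,k)$) is the maximum of $|\mathrm{sat}_t(F)|$ over $t$-admissible $k$-CNF (resp. monotone $k$-CNF) formulas $F$ on $n$ variables. *)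

(* Defs.v *)
From mathcomp Require Import all_boot.
Set Implicit Arguments. Unset Strict Implicit. Unset Printing Implicit Defensive.

(* A literal over x_1..x_n: (i, true) is x_i, (i, false) is ~ x_i. *)
Definition lit (n : nat) : finType := ('I_n * bool)%type.
Definition lneg n (l : lit n) : lit n := (l.1, ~~ l.2).

(* A clause is a finite set of literals (a disjunction);
   a CNF formula is a finite set of clauses (a conjunction). *)
Definition clause n := {set lit n}.
Definition cnf n := {set clause n}.

Definition is_kcnf n (k : nat) (F : cnf n) : bool :=
  [forall C in F, #|C| <= k].

Definition monotone n (F : cnf n) : bool :=
  [forall C in F, forall l in C, l.2].

Definition assignment n := {ffun 'I_n -> bool}.
Definition weight n (a : assignment n) : nat := #|[set i | a i]|.

Definition lit_val n (a : assignment n) (l : lit n) : bool := a l.1 == l.2.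
Definition clause_sat n (a : assignment n) (C : clause n) : bool :=
  [exists l in C, lit_val a l].
Definition satisfies n (a : assignment n) (F : cnf n) : bool :=
  [forall C in F, clause_sat a C].

Definition sat_t n (t : nat) (F : cnf n) : {set assignment n} :=
  [set a | satisfies a F && (weight a == t)].

Definition admissible n (t : nat) (F : cnf n) : bool :=
  [forall a : assignment n, satisfies a F ==> (t <= weight a)].

(* Implication graph G(F): for each clause X \/ Y, edges ~X -> Y and ~Y -> X.
   A unit clause {X} is read as X \/ X, giving the edge ~X -> X. *)
Definition impl_edge n (F : cnf n) : rel (lit n) :=
  fun u v => [exists C in F, exists X in C, exists Y in C,
    [&& u == lneg X, v == Y & (X != Y) || (#|C| == 1)]].

Definition acyclic n (F : cnf n) : bool :=
  ~~ [exists u, exists v, impl_edge F u v && connect (impl_edge F) v u].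

Definition S (n t k : nat) : nat :=
  \max_(F : cnf n | is_kcnf k F && admissible t F) #|sat_t t F|.
Definition Splus (n t k : nat) : nat :=
  \max_(F : cnf n | [&& is_kcnf k F, monotone F & admissible t F]) #|sat_t t F|.

(* Main.v *)
Require Import Defs.
From mathcomp Require Import all_boot.
Set Implicit Arguments. Unset Strict Implicit.

Definition maj n (a b c : assignment n) : assignment n :=
  [ffun i => (a i && b i) || (a i && c i) || (b i && c i)].

Lemma maj_sat n (F : cnf n) a b c : is_kcnf 2 F ->
  satisfies a F -> satisfies b F -> satisfies c F -> satisfies (maj a b c) F.
Proof.
move=> /forallP HF /forallP Ha /forallP Hb /forallP Hc; apply/forallP => C.
apply/implyP => CF.
move: (HF C) (Ha C) (Hb C) (Hc C); rewrite CF /= => HC.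
move=> /existsP [la /andP [laC va]] /existsP [lb /andP [lbC vb]]
  /existsP [lc /andP [lcC vc]].
have key : forall (l : lit n) (x y z : assignment n), lit_val x l -> lit_val y l -> lit_val (maj x y z) l
          /\ lit_val (maj z x y) l /\ lit_val (maj x z y) l.
  move=> l x y z; rewrite /lit_val /maj
 !ffunE.
  by case: (x l.1) (y l.1) (z l.1) (l.2) => [] [] [] [].
have mC : forall l, l \in C -> lit_val (maj a b c) l -> clause_sat (maj a b c) C.
  by move=> l lC vl; apply/existsP; exists l; rewrite lC.
case: (eqVneq la lb) => [eab | nab].
  by subst lb; apply: (mC la) => //; case: (key la a b c va vb).
case: (eqVneq la lc) => [eac | nac].
  subst lc; apply: (mC la) => //; case: (key la a c b va vc) => _ [_ H].
  by move: H; rewrite /maj /lit_val !ffunE; case: (a la.1) (b la.1) (c la.1) => [] [] [].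
case: (eqVneq lb lc) => [ebc | nbc].
  subst lc; apply: (mC lb) => //; case: (key lb b c a vb vc) => _ [H _].
  by move: H; rewrite /maj /lit_val !ffunE; case: (a lb.1) (b lb.1) (c lb.1) => [] [] [].
have : #|[set la; lb; lc]| <= #|C|.
  apply: subset_leq_card; apply/subsetP => x.
  by rewrite !inE => /orP [/orP [] | ] /eqP ->.
rewrite setUC cardsU1 cards2 !inE [lc == la]eq_sym [lc == lb]eq_sym (negbTE nac) (negbTE nbc) nab /=.
by move=> H; move: (leq_trans H HC).
Qed.

Lemma helly n (F : cnf n) (A : {set assignment n}) (Z : {set 'I_n}) :
  is_kcnf 2 F -> (forall a, a \in A -> satisfies a F) ->
  (forall i j, i \in Z -> j \in Z -> exists2 a, a \in A & ~~ a i && ~~ a j) ->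
  forall K : {set 'I_n}, K \subset Z -> K != set0 ->
  exists2 b, satisfies b F & forall i, i \in K -> ~~ b i.
Proof.
move=> H2 HA HZ K; have [m] := ubnP #|K|; elim: m K => // m IH K szK KZ Kn0.
case: (set_0Vmem K) Kn0 => [-> | [i1 i1K]]; first by rewrite eqxx.
move=> _.
case: (boolP [exists i2, (i2 \in K) && (i2 != i1)]) => [/existsP [i2 /andP [i2K ne]] | nex].
  have sub : forall i, i \in K -> K :\ i \subset Z.
    by move=> i _; apply: subset_trans KZ; apply: subD1set.
  have lt : forall i, i \in K -> #|K :\ i| < m.
    by move=> i iK; rewrite (cardsD1 i K) iK add1n ltnS in szK.
  have [a Sa Ha] : exists2 b, satisfies b F & forall i, i \in K :\ i1 -> ~~ b i.
    apply: IH; [exact: lt | exact: sub |].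
    by apply/set0Pn; exists i2; rewrite !inE ne.
  have [b Sb Hb] : exists2 b, satisfies b F & forall i, i \in K :\ i2 -> ~~ b i.
    apply: IH; [exact: lt | exact: sub |].
    by apply/set0Pn; exists i1; rewrite !inE eq_sym ne.
  have [c cA /andP [c1 c2]] := HZ i1 i2 (subsetP KZ _ i1K) (subsetP KZ _ i2K).
  exists (maj a b c); first by apply: maj_sat => //; apply: HA.
  move=> x xK; rewrite /maj ffunE.
  case: (eqVneq x i1) => [-> | nx1].
    have := Hb i1; rewrite !inE eq_sym ne i1K => /(_ isT) /negbTE ->.
    by rewrite (negbTE c1) !andbF.
  case: (eqVneq x i2) => [-> | nx2].
    have := Ha i2; rewrite !inE ne i2K => /(_ isT) /negbTE ->.
    by rewrite (negbTE c2) !andbF.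
  have := Ha x; rewrite !inE nx1 xK => /(_ isT) /negbTE ->.
  have := Hb x; rewrite !inE nx2 xK => /(_ isT) /negbTE ->.
  by [].
have [a aA /andP [a1 _]] := HZ i1 i1 (subsetP KZ _ i1K) (subsetP KZ _ i1K).
exists a; first exact: HA.
move=> x xK; case: (eqVneq x i1) => [-> // | nx].
by move/existsPn: nex => /(_ x); rewrite xK nx.
Qed.

Definition clos n t (F : cnf n) : cnf n :=
  [set C : clause n | [&& #|C| <= 2, [forall l in C, l.2 : bool] &
                          [forall a in sat_t t F, clause_sat a C]]].

Lemma clos_k n t (F : cnf n) : is_kcnf 2 (clos t F).
Proof. by apply/forallP => C; apply/implyP; rewrite inE => /and3P []. Qed.

Lemma clos_mono n t (F : cnf n) : monotone (clos t F).
Proof. by apply/forallP => C; apply/implyP; rewrite inE => /and3P []. Qed.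

Lemma clos_acyclic n t (F : cnf n) : acyclic (clos t F).
Proof.
have edge : forall u v, impl_edge (clos t F) u v -> (u.2 = false) /\ (v.2 = true).
  move=> u v /existsP [C /andP [CF /existsP [X /andP [XC /existsP [Y /andP [YC]]]]]].
  move: CF; rewrite inE => /and3P [_ /forallP mC _].
  case/and3P => /eqP -> /eqP -> _; split.
    by move: (mC X); rewrite XC /= => ->.
  by move: (mC Y); rewrite YC.
apply/existsP => [[u /existsP [v /andP [/edge [u2 v2] /connectP [p pth lst]]]]].
case: p pth lst => [_ /= eq | z p /= /andP [/edge [] ]]; last by rewrite v2.
by move: u2; rewrite eq v2.
Qed.

Lemma clos_sub n t (F : cnf n) : sat_t t F \subset sat_t t (clos t F).
Proof.
apply/subsetP => a aS; move: (aS); rewrite !inE => /andP [_ ->]; rewrite andbT.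
apply/forallP => C; apply/implyP; rewrite inE => /and3P [_ _ /forallP /(_ a)].
by rewrite aS.
Qed.

Lemma clos_adm n t (F : cnf n) : t <= n -> is_kcnf 2 F -> admissible t F ->
  admissible t (clos t F).
Proof.
move=> tn H2 /forallP adm; apply/forallP => s; apply/implyP => ss.
rewrite leqNgt; apply/negP => lt.
set Z := [set i | ~~ s i].
have Zn0 : Z != set0.
  apply/negP => /eqP Z0.
  have : weight s = n.
    rewrite /weight -[RHS]card_ord; apply: eq_card => i.
    rewrite !inE; case si: (s i) => //.
    have : i \in Z by rewrite inE si.
    by rewrite Z0 inE.
  by move=> ws; move: lt; rewrite ws ltnNge tn.
have HZ : forall i j, i \in Z -> j \in Z ->
    exists2 a, a \in sat_t t F & ~~ a i && ~~ a j.
  move=> i j; rewrite !inE => si sj.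
  pose C : clause n := [set (i, true); (j, true)].
  have CnF : C \notin clos t F.
    apply/negP => CF; move/forallP: ss => /(_ C); rewrite CF /=.
    by move=> /existsP [l /andP []]; rewrite !inE => /orP [] /eqP -> /=;
      rewrite /lit_val /=; [rewrite (negbTE si) | rewrite (negbTE sj)].
  move: CnF; rewrite inE cards2 ltnS leq_b1 /=.
  have -> : [forall l in C, l.2 : bool].
    by apply/forallP => l; apply/implyP; rewrite !inE => /orP [] /eqP ->.
  rewrite /= => /forallPn [a]; rewrite negb_imply => /andP [aS nC].
  exists a => //; apply/andP; split; apply/negP => ai; apply: (negP nC);
    apply/existsP; [exists (i, true) | exists (j, true)];
    by rewrite !inE eqxx ?orbT /lit_val /= ai.
have HA : forall a, a \in sat_t t F -> satisfies a F.
  by move=> a; rewrite inE => /andP [].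
have [b Sb Hb] := helly H2 HA HZ (subxx Z) Zn0.
have := adm b; rewrite Sb /= => tb.
have : weight b <= weight s.
  apply: subset_leq_card; apply/subsetP => i; rewrite !inE => bi.
  apply/negP => /negP si.
  by have := Hb i; rewrite inE si bi => /(_ isT).
by move=> wb; move: (leq_trans lt (leq_trans tb wb)); rewrite ltnn.
Qed.

Lemma clos_le n t (F : cnf n) : #|sat_t t F| <= #|sat_t t (clos t F)|.
Proof. exact: subset_leq_card (clos_sub t F). Qed.

Theorem lemma4 (n t : nat) : t <= n ->
  (exists F : cnf n,
     [/\ is_kcnf 2 F, monotone F, acyclic F, admissible t F
       & #|sat_t t F| = S n t 2])
  /\ Splus n t 2 = S n t 2.
Proof.
move=> tn.
have good : forall F : cnf n, is_kcnf 2 F && admissible t F ->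
    [&& is_kcnf 2 (clos t F), monotone (clos t F) & admissible t (clos t F)].
  move=> F /andP [k a]; rewrite clos_k clos_mono /=; exact: clos_adm.
have SleSp : S n t 2 <= Splus n t 2.
  apply/bigmax_leqP => F PF; apply: leq_trans (clos_le t F) _.
  exact: (leq_bigmax_cond (clos t F) (good F PF)).
have SpleS : Splus n t 2 <= S n t 2.
  apply/bigmax_leqP => F /and3P [k _ a].
  by apply: (leq_bigmax_cond F); rewrite k a.
split; last by apply/eqP; rewrite eqn_leq SleSp SpleS.
have ne : 0 < #|[pred F : cnf n | is_kcnf 2 F && admissible t F]|.
  apply/card_gt0P; exists [set set0 : clause n]; rewrite inE /=.
  apply/andP; split.
    by apply/forallP => C; apply/implyP; rewrite inE => /eqP ->; rewrite cards0.
  apply/forallP => a; apply/implyP => /forallP /(_ set0); rewrite inE eqxx /=.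
  by move=> /existsP [l]; rewrite inE.
have [F0 PF0 eqS] := eq_bigmax_cond (fun F : cnf n => #|sat_t t F|) ne.
have PF0' : is_kcnf 2 F0 && admissible t F0 by [].
exists (clos t F0); case/and3P: (good F0 PF0') => k m a; split => //.
  exact: clos_acyclic.
apply/eqP; rewrite eqn_leq; apply/andP; split.
  by apply: (leq_bigmax_cond (clos t F0)); rewrite k a.
have -> : S n t 2 = #|sat_t t F0|.
  by rewrite -eqS /S; apply: eq_bigl => F; rewrite inE.
exact: clos_le.
Qed.
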